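(* Let $H$ be a compactly generated locally compact group such that for every pair $(X,\alpha),(Y,\beta)$ in $\mathrm{Geom}(H)$ the orbital map $X\to Y$ is a rough similarity. Then: (1) if $K$ is a compact normal subgroup of $H$, then for every pair $(X,\alpha),(Y,\beta)$ in $\mathrm{Geom}(H/K)$ the orbital map $X\to Y$ is a rough similarity; (2) if $G$ is a locally compact group receiving an injective continuous homomorphism from $H$ with closed cocompact image, then for every pair $(X,\alpha),(Y,\beta)$ in $\mathrm{Geom}(G)$ the orbital map $X\to Y$ is a rough similarity.
   Context: For a locally compact compactly generated group $G$, $\mathrm{Geom}(G)$ is the collection of pairs $(X,\alpha)$ with $X$ a proper geodesic metric space and $\alpha\colon G\to\mathrm{Isom}(X)$ a continuous, proper, cocompact action. For $(X,\alpha),(Y,\beta)\in\mathrm{Geom}(G)$ and points $o_X\in X$, $o_Y\in Y$, the orbital map is the map $\alpha(\gamma)o_X\mapsto\beta(\gamma)o_Y$ ($\gamma\in G$), extended to a quasiisometry $X\to Y$ and considered up to bounded distance. A map $\phi$ is a rough similarity if there are $\lambda>0$, $c\ge0$ with $\lambda d(x,x')-c\le d(\phi x,\phi x')\le\lambda d(x,x')+c$ for all $x,x'$. *)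

(* Defs.v *)
From HB Require Import structures.
From mathcomp Require Import all_boot all_order all_algebra.
From mathcomp Require Import all_classical all_reals all_analysis.
From mathcomp Require Import Rstruct Rstruct_topology.
From Stdlib Require Import Rdefinitions.
Set Implicit Arguments. Unset Strict Implicit. Unset Printing Implicit Defensive.
Import Order.TTheory GRing.Theory Num.Theory.
Local Open Scope classical_set_scope.
Local Open Scope ring_scope.

Record TopGroup := {
  tg_car :> topologicalType;
  tg_mul : tg_car -> tg_car -> tg_car;
  tg_one : tg_car;
  tg_inv : tg_car -> tg_car;
  tg_mulA : forall x y z, tg_mul x (tg_mul y z) = tg_mul (tg_mul x y) z;
  tg_mul1g : forall x, tg_mul tg_one x = x;
  tg_mulVg : forall x, tg_mul (tg_inv x) x = tg_one;
  tg_mul_cont : continuous (fun p : tg_car * tg_car => tg_mul p.1 p.2);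
  tg_inv_cont : continuous tg_inv }.

Arguments tg_mul {t}. Arguments tg_one {t}. Arguments tg_inv {t}.

Definition locally_compact_group (G : TopGroup) : Prop :=
  hausdorff_space G /\ forall x : G, exists U : set G, nbhs x U /\ compact U.

Definition generates (G : TopGroup) (S : set G) : Prop :=
  forall P : set G, S `<=` P -> P tg_one ->
    (forall x y, P x -> P y -> P (tg_mul x y)) -> (forall x, P x -> P (tg_inv x)) ->
    P = setT.

Definition compactly_generated (G : TopGroup) : Prop :=
  exists S : set G, compact S /\ generates S.

Definition group_hom (G1 G2 : TopGroup) (f : G1 -> G2) : Prop :=
  forall x y, f (tg_mul x y) = tg_mul (f x) (f y).

Definition normal_subgroup (G : TopGroup) (K : set G) : Prop :=
  K tg_one /\ (forall x y, K x -> K y -> K (tg_mul x y)) /\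
  (forall x, K x -> K (tg_inv x)) /\
  (forall g x, K x -> K (tg_mul (tg_mul g x) (tg_inv g))).

Record MetricSpace := {
  ms_car :> Type;
  ms_d : ms_car -> ms_car -> R;
  ms_d_ge0 : forall x y, 0 <= ms_d x y;
  ms_d_eq0 : forall x y, ms_d x y = 0 <-> x = y;
  ms_dC : forall x y, ms_d x y = ms_d y x;
  ms_d_tri : forall x y z, ms_d x z <= ms_d x y + ms_d y z }.

Arguments ms_d {m}.

Definition mopen (X : MetricSpace) (U : set X) : Prop :=
  forall x, U x -> exists r : R, 0 < r /\ [set y | ms_d x y < r] `<=` U.

Definition mcompact (X : MetricSpace) (A : set X) : Prop :=
  forall (I : Type) (U : I -> set X), (forall i, mopen (U i)) ->
    A `<=` \bigcup_(i in [set: I]) U i ->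
    exists s : seq I, A `<=` [set x | exists i, List.In i s /\ U i x].

Definition proper_metric (X : MetricSpace) : Prop :=
  forall (x : X) (r : R), mcompact [set y | ms_d x y <= r].

Definition geodesic_metric (X : MetricSpace) : Prop :=
  forall x y : X, exists c : R -> X, c 0 = x /\ c (ms_d x y) = y /\
    forall s t : R, 0 <= s <= ms_d x y -> 0 <= t <= ms_d x y ->
      ms_d (c s) (c t) = `|s - t|.

Definition isometry (X : MetricSpace) (f : X -> X) : Prop :=
  bijective f /\ forall x y, ms_d (f x) (f y) = ms_d x y.

(* Continuity into Isom(X) (compact-open topology,
   which on Isom(X) agrees with the topology of pointwise convergence) is
   continuity of every orbit map g |-> alpha g x. *)
Definition in_Geom (G : TopGroup) (X : MetricSpace) (alpha : G -> X -> X) : Prop :=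
  proper_metric X /\ geodesic_metric X /\
  ((forall g, isometry (alpha g)) /\
   (forall g h x, alpha (tg_mul g h) x = alpha g (alpha h x)) /\
   (forall x, alpha tg_one x = x)) /\
  (forall (x : X) (g : G) (e : R), 0 < e ->
     exists U : set G, nbhs g U /\ forall h, U h -> ms_d (alpha h x) (alpha g x) < e) /\
  (forall K : set X, mcompact K ->
     compact (closure [set g : G | exists k, K k /\ K (alpha g k)])) /\
  (exists K : set X, mcompact K /\ forall x : X, exists g k, K k /\ x = alpha g k).

Definition rough_similarity (X Y : MetricSpace) (phi : X -> Y) : Prop :=
  exists lam c : R, 0 < lam /\ 0 <= c /\ forall x x' : X,
    lam * ms_d x x' - c <= ms_d (phi x) (phi x') <= lam * ms_d x x' + c.

(* The orbital map alpha(g) oX |-> beta(g) oY, extended to X and taken up to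
   bounded distance, is a rough similarity: some map X -> Y at bounded distance
   from the orbit correspondence is a rough similarity. *)
Definition orbital_map_rough_similarity (G : TopGroup) (X Y : MetricSpace)
    (alpha : G -> X -> X) (beta : G -> Y -> Y) (oX : X) (oY : Y) : Prop :=
  exists phi : X -> Y, rough_similarity phi /\
    exists C : R, forall g : G, ms_d (phi (alpha g oX)) (beta g oY) <= C.

Definition Geom_orbital_rough_similar (G : TopGroup) : Prop :=
  forall (X Y : MetricSpace) (alpha : G -> X -> X) (beta : G -> Y -> Y),
    in_Geom alpha -> in_Geom beta ->
    forall (oX : X) (oY : Y), orbital_map_rough_similarity alpha beta oX oY.

(* Main.v *)
Require Import Defs.
From HB Require Import structures.
From mathcomp Require Import all_boot all_order all_algebra.
From mathcomp Require Import all_classical all_reals all_analysis.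
From mathcomp Require Import Rstruct Rstruct_topology lra.
Set Implicit Arguments. Unset Strict Implicit. Unset Printing Implicit Defensive.
Import Order.TTheory GRing.Theory Num.Theory.
Local Open Scope classical_set_scope.

Section Grp.
Variable G : TopGroup.
Local Notation "x * y" := (tg_mul x y).
Local Notation "x ^-1" := (tg_inv x).
Local Notation "1" := (@tg_one G).

Lemma mulgV (x : G) : x * x^-1 = 1.
Proof.
have e : (x^-1)^-1 * x^-1 = 1 := tg_mulVg _.
rewrite -[x * x^-1]tg_mul1g -{1}e -tg_mulA (tg_mulA (x^-1)) tg_mulVg tg_mul1g.
exact: e.
Qed.

Lemma mulg1 (x : G) : x * 1 = x.
Proof. by rewrite -(tg_mulVg x) tg_mulA mulgV tg_mul1g. Qed.

Lemma mulKg (a x : G) : a^-1 * (a * x) = x.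
Proof. by rewrite tg_mulA tg_mulVg tg_mul1g. Qed.
Lemma mulKVg (a x : G) : a * (a^-1 * x) = x.
Proof. by rewrite tg_mulA mulgV tg_mul1g. Qed.

Lemma invgK (x : G) : (x^-1)^-1 = x.
Proof. by rewrite -[LHS]mulg1 -(tg_mulVg x) tg_mulA tg_mulVg tg_mul1g. Qed.

Lemma invg_uniq (a b : G) : a * b = 1 -> a = b^-1.
Proof. by move=> e; rewrite -[a]mulg1 -(mulgV b) tg_mulA e tg_mul1g. Qed.

Lemma invMg (x y : G) : (x * y)^-1 = y^-1 * x^-1.
Proof. by symmetry; apply: invg_uniq; rewrite -tg_mulA mulKg tg_mulVg. Qed.

Lemma lmul_cont (a : G) : continuous (tg_mul a).
Proof.
move=> x; apply: (@continuous2_cvg _ _ _ _ _ _ (fun _ => a) id (fun u v => u * v)).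
- exact: (@tg_mul_cont G (a, x)).
- exact: cvg_cst.
- exact: cvg_id.
Qed.

Lemma rmul_cont (a : G) : continuous (fun x => x * a).
Proof.
move=> x; apply: (@continuous2_cvg _ _ _ _ _ _ id (fun _ => a) (fun u v => u * v)).
- exact: (@tg_mul_cont G (x, a)).
- exact: cvg_id.
- exact: cvg_cst.
Qed.

End Grp.

Lemma hom1 (G1 G2 : TopGroup) (f : G1 -> G2) : group_hom f -> f tg_one = tg_one.
Proof.
move=> hf; have e := hf tg_one tg_one; rewrite tg_mul1g in e.
have h : tg_mul (tg_inv (f tg_one)) (f tg_one) =
  tg_mul (tg_inv (f tg_one)) (tg_mul (f tg_one) (f tg_one)) by rewrite -e.
by rewrite mulKg tg_mulVg in h.
Qed.

Section Topo.
Context {T : topologicalType}.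

Lemma fin_cover (C : set T) (O : T -> set T) :
  compact C -> (forall x, C x -> nbhs x (O x)) ->
  exists s : seq T, (forall x, List.In x s -> C x) /\
    C `<=` [set y | exists x, List.In x s /\ O x y].
Proof.
move=> cC hO; apply: contrapT => nfin.
pose B := fun s : seq T => C `\` [set y | exists x, List.In x s /\ O x y].
pose D := fun s : seq T => forall x, List.In x s -> C x.
have FF : Filter (filter_from D B).
  apply: filter_from_filter; first by exists [::].
  move=> i j Di Dj; exists (i ++ j).
    by move=> x hx; case: (List.in_app_or _ _ _ hx) => [/Di|/Dj].
  move=> y [Cy ny]; split; split => //; move=> [x [xi Oxy]]; apply: ny;
    exists x; split => //; apply: List.in_or_app.
    by left.
  by right.
have PF : ProperFilter (filter_from D B).
  apply: filter_from_proper => // s Ds; apply: contrapT => hB.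
  apply: nfin; exists s; split => // y Cy; apply: contrapT => ny.
  by apply: hB; exists y.
have [|x [Cx clx]] := cC _ PF.
  by exists [::] => // y [].
have Dx : D [:: x] by move=> z [<-|[]].
have [y [[_ ny] Oy]] := clx _ _ (ex_intro2 _ _ [:: x] Dx (fun z (h : B [:: x] z) => h)) (hO x Cx).
by apply: ny; exists x; split => //; left.
Qed.

End Topo.

Lemma compact_image2 (T U V : topologicalType) (f : T * U -> V) (A : set T) (B : set U) :
  continuous f -> compact A -> compact B -> compact (f @` (A `*` B)).
Proof.
move=> cf cA cB; apply: continuous_compact; first exact: continuous_subspaceT.
exact: compact_setX.
Qed.

Lemma compact_image1 (T V : topologicalType) (f : T -> V) (A : set T) :
  continuous f -> compact A -> compact (f @` A).
Proof.
move=> cf cA; apply: continuous_compact => //; exact: continuous_subspaceT.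
Qed.

Lemma compact_list_union (T : topologicalType) (I : Type) (s : seq I) (f : I -> set T) :
  (forall i, List.In i s -> compact (f i)) ->
  compact [set x | exists i, List.In i s /\ f i x].
Proof.
elim: s => [|a s IH] hf.
  have -> : [set x | exists i, List.In i [::] /\ f i x] = set0.
    by apply/seteqP; split => x // [i [[]]].
  exact: compact0.
have -> : [set x | exists i, List.In i (a :: s) /\ f i x] =
   f a `|` [set x | exists i, List.In i s /\ f i x].
  apply/seteqP; split => x.
    by move=> [i [[<-|ii] fx]]; [left|right; exists i].
  by move=> [fx|[i [ii fx]]]; [exists a; split => //; left|exists i; split => //; right].
apply: compactU; first by apply: hf; left.
by apply: IH => i ii; apply: hf; right.
Qed.

Lemma hom_inv (G1 G2 : TopGroup) (f : G1 -> G2) (x : G1) : group_hom f ->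
  f (tg_inv x) = tg_inv (f x).
Proof. by move=> hf; apply: invg_uniq; rewrite -hf tg_mulVg hom1. Qed.

Lemma quot_preimage_compact (H Q : TopGroup) (K : set H) (pi : H -> Q) :
  locally_compact_group H -> compact K -> group_hom pi ->
  (forall U : set H, open U -> open (pi @` U)) -> (forall q, exists h, pi h = q) ->
  (forall h, pi h = tg_one <-> K h) ->
  forall C : set Q, compact C -> exists E : set H, compact E /\ pi @^-1` C `<=` E.
Proof.
move=> [_ lcH] cK hpi opi spi kpi C cC.
have [N [nN cN]] := lcH tg_one.
have [sec hsec] := choice spi.
pose O q := pi @` [set h | N° (tg_mul (tg_inv (sec q)) h)].
have hO : forall q, C q -> nbhs q (O q).
  move=> q _; apply: open_nbhs_nbhs; split.
    apply: opi; apply: open_comp; last exact: open_interior.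
    by move=> x _; apply: lmul_cont.
  exists (sec q) => //=; rewrite tg_mulVg.
  exact: nbhs_singleton (nbhs_interior nN).
have [s [sC Cs]] := fin_cover cC hO.
pose Eq q := (fun p : H * H => tg_mul (sec q) (tg_mul p.1 p.2)) @` (N `*` K).
exists [set x | exists q, List.In q s /\ Eq q x]; split.
  apply: compact_list_union => q _; apply: compact_image2 => //.
    move=> p; apply: (@continuous_comp _ _ _ (fun p : H * H => tg_mul p.1 p.2)
      (tg_mul (sec q))); first exact: (@tg_mul_cont H p).
    exact: lmul_cont.
move=> h /Cs [q [qs [h' hN e]]]; exists q; split => //.
exists (tg_mul (tg_inv (sec q)) h', tg_mul (tg_inv h') h); first split => /=.
- exact: interior_subset hN.
- by apply/kpi; rewrite hpi (hom_inv _ hpi) e tg_mulVg.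
- by rewrite /= -tg_mulA !mulKVg.
Qed.

Lemma closure_preimage (T U : topologicalType) (f : T -> U) (A : set U) :
  continuous f -> closure (f @^-1` A) `<=` f @^-1` closure A.
Proof.
move=> cf.
have cl : closed (f @^-1` closure A).
  by apply: preimage_closed; [move=> x _; apply: cf| exact: closed_closure].
rewrite [X in _ `<=` X](closure_id _).1 //; apply: closureS => x /=.
exact: subset_closure.
Qed.

Lemma in_Geom_pull (H G : TopGroup) (f : H -> G) (X : MetricSpace) (alpha : G -> X -> X) :
  group_hom f -> continuous f ->
  (forall C : set G, compact C -> exists E, compact E /\ f @^-1` C `<=` E) ->
  in_Geom alpha ->
  (exists K : set X, mcompact K /\ forall x : X, exists h k, K k /\ x = alpha (f h) k) ->
  in_Geom (fun h => alpha (f h)).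
Proof.
move=> hf cf pf [pX [gX [[iso [act one]] [cont [prp _]]]]] cc.
split => //; split => //; split; [split; [|split]|split; [|split]] => //.
- by move=> g h x; rewrite hf act.
- by move=> x; rewrite hom1 // one.
- move=> x g e e0; have [U [nU hU]] := cont x (f g) e e0.
  exists (f @^-1` U); split; last by move=> h /hU.
  exact: cf.
- move=> K cK; have [E [cE sE]] := pf _ (prp K cK).
  apply: (subclosed_compact _ cE); first exact: closed_closure.
  move=> h hc; apply: sE.
  exact: (@closure_preimage _ _ f [set g | exists k, K k /\ K (alpha g k)] cf h hc).
Qed.

Lemma part1 (H : TopGroup) : locally_compact_group H -> Geom_orbital_rough_similar H ->
  (forall K : set H, compact K -> normal_subgroup K ->
     forall (Q : TopGroup) (pi : H -> Q),
       group_hom pi -> continuous pi -> (forall U : set H, open U -> open (pi @` U)) ->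
       (forall q : Q, exists h : H, pi h = q) ->
       (forall h : H, pi h = tg_one <-> K h) ->
       Geom_orbital_rough_similar Q).
Proof.
move=> lcH hH K cK _ Q pi hpi cpi opi spi kpi X Y alpha beta hA hB oX oY.
have pf := quot_preimage_compact lcH cK hpi opi spi kpi.
have pull : forall (Z : MetricSpace) (g : Q -> Z -> Z), in_Geom g -> in_Geom (fun h => g (pi h)).
  move=> Z g hg; apply: in_Geom_pull => //.
  case: hg => [_ [_ [_ [_ [_ [K0 [cK0 hK0]]]]]]].
  exists K0; split => // x; have [q [k [Kk ->]]] := hK0 x.
  by have [h <-] := spi q; exists h, k.
have [phi [rs [C hC]]] := hH _ _ _ _ (pull _ _ hA) (pull _ _ hB) oX oY.
exists phi; split => //; exists C => q; have [h <-] := spi q; exact: hC h.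
Qed.

Section SigmaCompact.
Variable H : TopGroup.
Local Notation mulp := (fun p : H * H => tg_mul p.1 p.2).

Fixpoint powS (S : set H) (n : nat) : set H :=
  match n with 0 => S | n'.+1 => mulp @` (powS S n' `*` S) end.

Lemma powS_compact S n : compact S -> compact (powS S n).
Proof.
move=> cS; elim: n => [|n IH] //=; apply: compact_image2 => //.
exact: (@tg_mul_cont H).
Qed.

Lemma powS_mul S a b x y : powS S a x -> powS S b y -> powS S (a + b).+1 (tg_mul x y).
Proof.
elim: b y => [|b IH] y xa /=.
  by move=> Sy; rewrite addn0; exists (x, y).
move=> [[y' s] [/= y'b Ss] <-]; exists (tg_mul x y', s); last by rewrite /= tg_mulA.
by split => //=; rewrite addnS; apply: IH.
Qed.

Lemma powS_inv S n x : (forall s, S s -> S (tg_inv s)) -> powS S n x -> powS S n (tg_inv x).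
Proof.
move=> Sinv; elim: n x => [|n IH] x /=; first exact: Sinv.
move=> [[x' s] [/= x'n Ss] <-]; rewrite invMg.
have := @powS_mul S 0 n _ _ (Sinv _ Ss) (IH _ x'n); rewrite add0n; done.
Qed.

Lemma sigma_compact : compactly_generated H ->
  exists P : nat -> set H, (forall n, compact (P n)) /\ forall h, exists n, P n h.
Proof.
move=> [S [cS gS]].
pose S' := S `|` tg_inv @` S `|` [set tg_one].
have cS' : compact S'.
  apply: compactU; last exact: compact_set1.
  apply: compactU => //; apply: compact_image1 => //; exact: tg_inv_cont.
have S'inv : forall s, S' s -> S' (tg_inv s).
  move=> s [[Ss|[t St <-]]|->].
  - by left; right; exists s.
  - by left; left; rewrite invgK.
  - by right; symmetry; apply: invg_uniq; rewrite tg_mul1g.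
exists (powS S'); split => [n|h]; first exact: powS_compact.
have e : (fun x => exists n, powS S' n x) = setT.
  apply: gS.
- by move=> x Sx; exists 0; left; left.
- by exists 0; right.
- by move=> x y [a xa] [b yb]; exists (a + b).+1; apply: powS_mul.
- by move=> x [a xa]; exists a; apply: powS_inv.
have : (setT : set H) h by [].
by rewrite -e.
Qed.

End SigmaCompact.

Lemma baire_lc (G : topologicalType) (R : set G) (F : nat -> set G) :
  hausdorff_space G -> (forall x : G, exists U, nbhs x U /\ compact U) ->
  closed R -> R !=set0 -> (forall n, closed (F n)) -> R `<=` \bigcup_n F n ->
  exists n U, open U /\ (R `&` U !=set0) /\ R `&` U `<=` F n.
Proof.
move=> hG lc cR [r Rr] cF RF; apply: contrapT => nB.
have step : forall p : nat * set G, exists V' : set G, open p.2 -> R `&` p.2 !=set0 ->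
   [/\ open V', R `&` V' !=set0, closure V' `<=` p.2 & closure V' `<=` ~` F p.1].
  case=> n V /=.
  have [hV|hV] := pselect (open V /\ R `&` V !=set0); last first.
    by exists set0 => oV RV; exfalso; apply: hV.
  case: hV => oV RV.
  have [x [[Rx Vx] nFx]] : exists x, (R `&` V) x /\ ~ F n x.
    apply: contrapT => hx; apply: nB; exists n, V; split => //; split => // y RVy.
    by apply: contrapT => nFy; apply: hx; exists y.
  have oW : open (V `&` ~` F n) by apply: openI => //; exact: closed_openC.
  have nW : nbhs x (V `&` ~` F n) by apply: open_nbhs_nbhs.
  have [N [nN cN]] := lc x.
  have [D nD sD] := compact_regular hG cN nN nW.
  exists D° => _ _; split.
  - exact: open_interior.
  - by exists x; split => //; apply: nbhs_singleton; apply: nbhs_interior.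
  - by move=> y /(closureS (@interior_subset _ D)) /sD [].
  - by move=> y /(closureS (@interior_subset _ D)) /sD [].
have [nxt hnxt] := choice step.
have [N0 [nN0 cN0]] := lc r.
pose V := fix V n := if n is n'.+1 then nxt (n', V n') else N0°.
have inv : forall n, open (V n) /\ R `&` V n !=set0.
  elim => [|n [oV RV]] /=.
    split; first exact: open_interior.
    by exists r; split => //; apply: nbhs_singleton; apply: nbhs_interior.
  by have [] := hnxt (n, V n) oV RV.
have sub : forall n, closure (V n.+1) `<=` V n /\ closure (V n.+1) `<=` ~` F n.
  by move=> n; have [oV RV] := inv n; have [] := hnxt (n, V n) oV RV.
have mono : forall n m, (n <= m)%N -> closure (V m) `<=` closure (V n).
  move=> n m /subnKC <-; elim: (m - n)%N => [|k IH]; first by rewrite addn0.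
  rewrite addnS; apply: subset_trans IH; apply: subset_trans (sub _).1 _.
  exact: subset_closure.
pose E n := R `&` closure (V n).
have FF : ProperFilter (filter_from setT E).
  apply: filter_from_proper.
    apply: filter_from_filter; first by exists 0.
    move=> i j _ _; exists (maxn i j) => // y [Ry cy]; split; split => //.
      by apply: mono _ _ _ cy; apply: leq_maxl.
    by apply: mono _ _ _ cy; apply: leq_maxr.
  move=> n _; have [_ [y [Ry Vy]]] := inv n; exists y; split => //.
  exact: subset_closure.
have cV0 : compact (closure (V 0)).
  apply: (subclosed_compact _ cN0); first exact: closed_closure.
  rewrite [X in _ `<=` X](closure_id _).1; last exact: compact_closed.
  by apply: closureS; exact: interior_subset.
have [|p [_ clp]] := cV0 _ FF.
  by exists 0 => // y [].
have Ep : forall n, E n p.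
  move=> n; move: clp; rewrite clusterE => /(_ (E n)) h.
  have cE : closed (E n) by apply: closedI => //; exact: closed_closure.
  rewrite ((closure_id (E n)).1 cE); apply: h; exists n => //.
have [n _ Fn] := RF _ (Ep 0).1.
exact: (sub n).2 p (Ep n.+1).2 Fn.
Qed.

Lemma embed_preimage_compact (H G : TopGroup) (iota : H -> G) :
  locally_compact_group G -> compactly_generated H -> group_hom iota ->
  continuous iota -> injective iota -> closed (range iota) ->
  forall L : set G, compact L -> exists E : set H, compact E /\ iota @^-1` L `<=` E.
Proof.
move=> [hG lcG] cgH hi ci ii clR L cL.
have [P [cP covP]] := sigma_compact cgH.
have cF : forall n, closed (iota @` P n).
  by move=> n; apply: compact_closed => //; apply: compact_image1.
have Rne : range iota !=set0 by exists (iota tg_one); exists tg_one.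
have RF : range iota `<=` \bigcup_n (iota @` P n).
  by move=> y [h _ <-]; have [n Pn] := covP h; exists n => //; exists h.
have [n [U [oU [[y0 [[h0 _ ey] Uy]] sU]]]] := baire_lc hG lcG clR Rne cF RF.
pose W := [set g | U (tg_mul (iota h0) g)].
have oW : open W by apply: open_comp => // x _; apply: lmul_cont.
have W1 : W tg_one by rewrite /W /= mulg1 ey.
pose D := tg_mul (tg_inv h0) @` P n.
have cD : compact D by apply: compact_image1 => //; apply: lmul_cont.
have WD : forall h, W (iota h) -> D h.
  move=> h Wh.
  have : (range iota `&` U) (iota (tg_mul h0 h)).
    by split; [exists (tg_mul h0 h) | rewrite hi].
  move=> /sU [p Pp /ii ep]; exists p => //; rewrite ep mulKg //.
have cLR : compact (L `&` range iota) by apply: compact_closedI.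
pose O y := [set g | W (tg_mul (tg_inv y) g)].
have hO : forall y, (L `&` range iota) y -> nbhs y (O y).
  move=> y _; apply: open_nbhs_nbhs; split; last by rewrite /O /= tg_mulVg.
  by apply: open_comp => // x _; apply: lmul_cont.
have [s [sLR covs]] := fin_cover cLR hO.
have [sec hsec] : {sec : G -> H & forall y, range iota y -> iota (sec y) = y}.
  apply: (@choice G H (fun y h => range iota y -> iota h = y)) => y.
  have [[h _ <-]|ny] := pselect (range iota y); first by exists h.
  by exists tg_one => /ny.
exists [set x | exists y, List.In y s /\ ((tg_mul (sec y)) @` D) x]; split.
  apply: compact_list_union => y _; apply: compact_image1 => //; exact: lmul_cont.
move=> h Lh.
have hR : (L `&` range iota) (iota h) by split => //; exists h.
have [y [ys Oy]] := covs _ hR.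
exists y; split => //; exists (tg_mul (tg_inv (sec y)) h); last by rewrite mulKVg.
apply: WD; rewrite hi (hom_inv _ hi) hsec //.
by have [] := sLR _ ys.
Qed.

Local Open Scope ring_scope.

Lemma ball_mopen (X : MetricSpace) (x : X) (r : Rdefinitions.R) :
  mopen [set y | ms_d x y < r].
Proof.
move=> y hy; exists (r - ms_d x y); split; first by rewrite subr_gt0.
move=> z /= hz; have := ms_d_tri x y z; lra.
Qed.

Lemma foldr_ge (I : Type) (t : I -> Rdefinitions.R) (s : seq I) :
  (forall i, 0 <= t i) -> forall i, List.In i s -> t i <= foldr (fun j acc => t j + acc) 0 s.
Proof.
move=> t0 i; elim: s => [|a s IH] //= [->|hs].
  have : 0 <= foldr (fun j acc => t j + acc) 0 s.
    by elim: s {IH} => //= b s h; have := t0 b; lra.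
  lra.
by have := IH hs; have := t0 a; lra.
Qed.

Lemma mcompact_bounded (X : MetricSpace) (K : set X) (x0 : X) :
  mcompact K -> exists M, forall k, K k -> ms_d x0 k <= M.
Proof.
move=> cK.
have [|s covs] := cK nat (fun n => [set y | ms_d x0 y < n%:R]) (fun n => @ball_mopen X x0 n%:R).
  move=> k Kk; exists (Num.Def.archi_bound (ms_d x0 k)) => //.
  exact: archi_boundP (ms_d_ge0 _ _).
exists (foldr (fun j acc => j%:R + acc) 0 s) => k /covs [n [ns hn]].
have := @foldr_ge nat (fun j => j%:R) s (fun j => ler0n _ j) n ns; simpl in hn; lra.
Qed.

Lemma orbit_bounded (G : TopGroup) (X : MetricSpace) (alpha : G -> X -> X)
    (C : set G) (x : X) :
  (forall (g : G) (e : Rdefinitions.R), 0 < e ->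
     exists U : set G, nbhs g U /\ forall h, U h -> ms_d (alpha h x) (alpha g x) < e) ->
  compact C -> exists M, forall c, C c -> ms_d (alpha c x) x <= M.
Proof.
move=> cont cC.
have hO : forall g, C g -> nbhs g [set h | ms_d (alpha h x) (alpha g x) < 1].
  move=> g _; have [U [nU hU]] := cont g 1 ltr01; exact: filterS nU.
have [s [_ covs]] := fin_cover cC hO.
exists (foldr (fun j acc => (ms_d (alpha j x) x + 1) + acc) 0 s) => c /covs [g [gs hg]].
have := @foldr_ge G (fun j => ms_d (alpha j x) x + 1) s
  (fun j => addr_ge0 (ms_d_ge0 _ _) ler01) g gs.
simpl in hg; have := ms_d_tri (alpha c x) (alpha g x) x; lra.
Qed.

Lemma part2 (H : TopGroup) : compactly_generated H -> Geom_orbital_rough_similar H ->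
  (forall (G : TopGroup) (iota : H -> G),
     locally_compact_group G -> group_hom iota -> continuous iota -> injective iota ->
     closed (range iota) ->
     (exists C : set G, compact C /\ forall g : G, exists h c, C c /\ g = tg_mul (iota h) c) ->
     Geom_orbital_rough_similar G).
Proof.
move=> cgH hH G iota lcG hi ci ii clR [C [cC hC]] X Y alpha beta hA hB oX oY.
have pf := embed_preimage_compact lcG cgH hi ci ii clR.
have pull : forall (Z : MetricSpace) (g : G -> Z -> Z) (z : Z), in_Geom g ->
    in_Geom (fun h => g (iota h)).
  move=> Z g z hg; apply: in_Geom_pull => //.
  case: hg => [pZ [_ [[iso [act _]] [cont [_ [K0 [cK0 hK0]]]]]]].
  have [Mk hMk] := mcompact_bounded z cK0.
  have [Mc hMc] := orbit_bounded (cont z) cC.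
  exists [set y | ms_d z y <= Mk + Mc]; split; first exact: pZ.
  move=> x; have [g' [k [Kk ->]]] := hK0 x; have [h [c [Cc ->]]] := hC g'.
  exists h, (g c k); split; last by rewrite act.
  rewrite /=; have t := ms_d_tri z (g c z) (g c k).
  have e := (iso c).2 z k; have e' := ms_dC z (g c z).
  have := hMk k Kk; have := hMc c Cc; lra.
have [phi [[lam [c0 [lam0 [c00 hphi]]]] [C0 hC0]]] :=
  hH _ _ _ _ (pull _ _ oX hA) (pull _ _ oY hB) oX oY.
case: hA => [_ [_ [[isoA [actA _]] [contA _]]]].
case: hB => [_ [_ [[isoB [actB _]] [contB _]]]].
have [Mx hMx] := orbit_bounded (contA oX) cC.
have [My hMy] := orbit_bounded (contB oY) cC.
exists phi; split; first by exists lam, c0.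
exists (lam * Mx + c0 + C0 + My) => g; have [h [c [Cc ->]]] := hC g.
rewrite actA actB.
set a := alpha (iota h); set b := beta (iota h).
have /andP[_ e1] := hphi (a (alpha c oX)) (a oX).
rewrite /a (isoA _).2 in e1.
have e2 := hC0 h; simpl in e2.
have e3 : ms_d (b oY) (b (beta c oY)) = ms_d (beta c oY) oY.
  by rewrite /b (isoB _).2 ms_dC.
have hx := hMx c Cc; have hy := hMy c Cc.
have lamle : lam * ms_d (alpha c oX) oX <= lam * Mx by rewrite ler_wpM2l // ltW.
have t1 := ms_d_tri (phi (a (alpha c oX))) (phi (a oX)) (b (beta c oY)).
have t2 := ms_d_tri (phi (a oX)) (b oY) (b (beta c oY)).
rewrite /a /b in t1 t2 e2 e3 *.
lra.
Qed.

Local Close Scope ring_scope.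
Unset Implicit Arguments.

Theorem proposition6p1 (H : TopGroup) :
  locally_compact_group H -> compactly_generated H ->
  Geom_orbital_rough_similar H ->
  (forall K : set H, compact K -> normal_subgroup K ->
     forall (Q : TopGroup) (pi : H -> Q),
       group_hom pi -> continuous pi -> (forall U : set H, open U -> open (pi @` U)) ->
       (forall q : Q, exists h : H, pi h = q) ->
       (forall h : H, pi h = tg_one <-> K h) ->
       Geom_orbital_rough_similar Q) /\
  (forall (G : TopGroup) (iota : H -> G),
     locally_compact_group G -> group_hom iota -> continuous iota -> injective iota ->
     closed (range iota) ->
     (exists C : set G, compact C /\ forall g : G, exists h c, C c /\ g = tg_mul (iota h) c) ->
     Geom_orbital_rough_similar G).
Proof.
move=> lcH cgH hH; split; [exact: part1 | exact: part2].
Qed.
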